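(* Let $0<\mu<1$, $0<\nu<1$, $C>0$, $N_0\in\mathbb Z$, and for $n\ge N_0$ let $F_n,G_n\in\mathbb R^{1\times4}$ and $H_n\in\mathbb R^{2\times4}$ satisfy $\|F_n\|,\|G_n\|,\|H_n\|\le C\nu^n$. Consider the system $$\xi_{n+1}=\mu\xi_n+F_n\zeta_n,\quad \eta_{n+1}=\mu^{-1}\eta_n+G_n\zeta_n,\quad \chi_{n+1}=\chi_n+H_n\zeta_n,$$ where $\xi_n,\eta_n\in\mathbb R$, $\chi_n\in\mathbb R^2$, $\zeta_n=(\xi_n,\eta_n,\chi_n)^T\in\mathbb R^4$. Then there is an integer $N\ge N_0$ such that for every $\xi^0\in\mathbb R$ and $\chi_+\in\mathbb R^2$ there exists a unique solution $\{\zeta_n\}_{n\ge N}$ of the system with $\xi_N=\xi^0$, $\chi_n\to\chi_+$, $\xi_n\to0$ and $\eta_n\to0$ as $n\to+\infty$. *)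

(* Defs.v *)
From Stdlib Require Import Reals ZArith.
Open Scope R_scope.

(* A vector of R^4 is represented by a function nat -> R, only the
   components 0,1,2,3 being relevant.  A state zeta_n = (xi_n, eta_n, chi_n)
   has xi_n = zeta_n 0, eta_n = zeta_n 1, chi_n = (zeta_n 2, zeta_n 3). *)
Definition vec4 := nat -> R.

Definition dot4 (a z : vec4) : R := a 0%nat * z 0%nat + a 1%nat * z 1%nat
  + a 2%nat * z 2%nat + a 3%nat * z 3%nat.

Definition norm14 (a : vec4) : R := sqrt (dot4 a a).

Definition norm24 (h : nat -> vec4) : R :=
  sqrt (dot4 (h 0%nat) (h 0%nat) + dot4 (h 1%nat) (h 1%nat)).

Definition is_solution (mu : R) (F G : Z -> vec4) (H : Z -> nat -> vec4)
  (N : Z) (zeta : Z -> vec4) : Prop :=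
  forall n : Z, (N <= n)%Z ->
    zeta (n + 1)%Z 0%nat = mu * zeta n 0%nat + dot4 (F n) (zeta n) /\
    zeta (n + 1)%Z 1%nat = / mu * zeta n 1%nat + dot4 (G n) (zeta n) /\
    zeta (n + 1)%Z 2%nat = zeta n 2%nat + dot4 (H n 0%nat) (zeta n) /\
    zeta (n + 1)%Z 3%nat = zeta n 3%nat + dot4 (H n 1%nat) (zeta n).

Definition Zcv (u : Z -> R) (l : R) : Prop :=
  forall eps : R, eps > 0 -> exists M : Z, forall n : Z, (M <= n)%Z ->
    Rabs (u n - l) < eps.

(* Main.v *)
Require Import Defs.
From Stdlib Require Import Reals Lra Lia Psatz ZArith.
From Coquelicot Require Import Coquelicot.
Open Scope R_scope.

Lemma dot4_bound a w W : (forall i, (i < 4)%nat -> Rabs (w i) <= W) ->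
  Rabs (dot4 a w) <= 2 * norm14 a * W.
Proof.
  intros Hw.
  assert (H0 := Hw 0%nat ltac:(lia)). assert (H1 := Hw 1%nat ltac:(lia)).
  assert (H2 := Hw 2%nat ltac:(lia)). assert (H3 := Hw 3%nat ltac:(lia)).
  assert (HW : 0 <= W) by (pose proof (Rabs_pos (w 0%nat)); lra).
  unfold dot4, norm14.
  set (d := dot4 a a).
  assert (Hd : d = a 0%nat * a 0%nat + a 1%nat * a 1%nat + a 2%nat * a 2%nat + a 3%nat * a 3%nat) by reflexivity.
  assert (Hs : Rabs (a 0%nat) + Rabs (a 1%nat) + Rabs (a 2%nat) + Rabs (a 3%nat) <= 2 * sqrt d).
  { apply Rsqr_incr_0_var.
    - unfold Rsqr.
      replace (2 * sqrt d * (2 * sqrt d)) with (4 * (sqrt d * sqrt d)) by ring.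
      rewrite sqrt_sqrt by (rewrite Hd; nra).
      assert (E : forall x, Rabs x * Rabs x = x * x).
      { intro x. rewrite <- Rabs_mult. apply Rabs_right. nra. }
      pose proof (E (a 0%nat)); pose proof (E (a 1%nat)); pose proof (E (a 2%nat)); pose proof (E (a 3%nat)).
      rewrite Hd.
      set (x0 := Rabs (a 0%nat)) in *; set (x1 := Rabs (a 1%nat)) in *;
      set (x2 := Rabs (a 2%nat)) in *; set (x3 := Rabs (a 3%nat)) in *.
      pose proof (Rle_0_sqr (x0 - x1)); pose proof (Rle_0_sqr (x0 - x2)); pose proof (Rle_0_sqr (x0 - x3));
      pose proof (Rle_0_sqr (x1 - x2)); pose proof (Rle_0_sqr (x1 - x3)); pose proof (Rle_0_sqr (x2 - x3)).
      unfold Rsqr in *. lra.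
    - pose proof (sqrt_pos d); lra. }
  eapply Rle_trans. apply Rabs_triang. eapply Rle_trans. apply Rplus_le_compat_r. apply Rabs_triang.
  eapply Rle_trans. apply Rplus_le_compat_r. apply Rplus_le_compat_r. apply Rabs_triang.
  rewrite !Rabs_mult.
  pose proof (Rabs_pos (a 0%nat)); pose proof (Rabs_pos (a 1%nat)); pose proof (Rabs_pos (a 2%nat)); pose proof (Rabs_pos (a 3%nat)).
  assert (Rabs (a 0%nat) * Rabs (w 0%nat) <= Rabs (a 0%nat) * W) by (apply Rmult_le_compat_l; lra).
  assert (Rabs (a 1%nat) * Rabs (w 1%nat) <= Rabs (a 1%nat) * W) by (apply Rmult_le_compat_l; lra).
  assert (Rabs (a 2%nat) * Rabs (w 2%nat) <= Rabs (a 2%nat) * W) by (apply Rmult_le_compat_l; lra).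
  assert (Rabs (a 3%nat) * Rabs (w 3%nat) <= Rabs (a 3%nat) * W) by (apply Rmult_le_compat_l; lra).
  nra.
Qed.

Lemma norm24_row0 h : norm14 (h 0%nat) <= norm24 h.
Proof. unfold norm14, norm24. apply sqrt_le_1_alt.
  assert (0 <= dot4 (h 1%nat) (h 1%nat)) by (unfold dot4; nra). lra. Qed.
Lemma norm24_row1 h : norm14 (h 1%nat) <= norm24 h.
Proof. unfold norm14, norm24. apply sqrt_le_1_alt.
  assert (0 <= dot4 (h 0%nat) (h 0%nat)) by (unfold dot4; nra). lra. Qed.

Lemma small_zero x A q : 0 <= q < 1 -> (forall j, Rabs x <= A * q ^ j) -> x = 0.
Proof.
  intros Hq H.
  destruct (Req_dec x 0) as [|Hx]; auto. exfalso.
  assert (Hp : 0 < Rabs x) by (apply Rabs_pos_lt; auto).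
  assert (HA : 0 < A). { specialize (H 0%nat). simpl in H. lra. }
  destruct (pow_lt_1_zero q ltac:(rewrite Rabs_right; lra) (Rabs x / A)) as [K HK].
  { apply Rdiv_lt_0_compat; lra. }
  specialize (HK K (le_n K)). specialize (H K).
  rewrite Rabs_right in HK by (apply Rle_ge, pow_le; lra).
  apply (Rmult_lt_compat_l A) in HK; auto.
  replace (A * (Rabs x / A)) with (Rabs x) in HK by (field; lra). lra.
Qed.

Lemma series_bound (a : nat -> R) A r : 0 <= r < 1 -> (forall k, Rabs (a k) <= A * r ^ k) ->
  ex_series a /\ Rabs (Series a) <= A / (1 - r).
Proof.
  intros Hr Ha.
  assert (Hg : is_series (fun k => A * r ^ k) (A * / (1 - r))).
  { apply (is_series_scal_l A (fun k => r ^ k)). apply is_series_geom. rewrite Rabs_right; lra. }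
  assert (Hab : ex_series (fun k => Rabs (a k))).
  { apply (@ex_series_le R_AbsRing R_CompleteNormedModule _ (fun k => A * r ^ k)).
    - intro n. change (norm (Rabs (a n))) with (Rabs (Rabs (a n))). rewrite Rabs_Rabsolu. apply Ha.
    - eexists; exact Hg. }
  split. apply ex_series_Rabs; auto.
  eapply Rle_trans. apply Series_Rabs; auto.
  unfold Rdiv. rewrite <- (is_series_unique _ _ Hg).
  apply Series_le. intro n; split. apply Rabs_pos. apply Ha. eexists; exact Hg.
Qed.

Definition ncv (u : nat -> R) (l : R) : Prop :=
  forall eps, eps > 0 -> exists M : nat, forall m, (M <= m)%nat -> Rabs (u m - l) < eps.

Lemma le_lim x y A q : 0 <= q < 1 -> (forall j, x <= y + A * q ^ j) -> x <= y.
Proof.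
  intros Hq H. apply le_epsilon. intros eps Heps.
  destruct (Rle_lt_dec A 0) as [HA|HA].
  { specialize (H 0%nat). simpl in H. lra. }
  destruct (pow_lt_1_zero q ltac:(rewrite Rabs_right; lra) (eps / A)) as [K HK].
  { apply Rdiv_lt_0_compat; lra. }
  specialize (HK K (le_n K)). specialize (H K).
  rewrite Rabs_right in HK by (apply Rle_ge, pow_le; lra).
  apply (Rmult_lt_compat_l A) in HK; auto.
  replace (A * (eps / A)) with eps in HK by (field; lra). lra.
Qed.

Lemma fwd_bound (u : nat -> R) mu c : 0 <= mu < 1 -> 0 <= c -> u 0%nat = 0 ->
  (forall m, Rabs (u (S m)) <= mu * Rabs (u m) + c) -> forall m, Rabs (u m) <= c / (1 - mu).
Proof.
  intros Hmu Hc H0 H m. induction m.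
  - rewrite H0, Rabs_R0. apply Rdiv_le_0_compat; lra.
  - eapply Rle_trans. apply H.
    apply (Rmult_le_compat_l mu) in IHm; [|lra].
    replace (c / (1 - mu)) with (mu * (c / (1 - mu)) + c) by (field; lra). lra.
Qed.

Lemma back_bound (u : nat -> R) q c M : 0 <= q < 1 -> 0 <= c ->
  (forall m, Rabs (u m) <= M) ->
  (forall m, Rabs (u m) <= q * Rabs (u (S m)) + c) -> forall m, Rabs (u m) <= c / (1 - q).
Proof.
  intros Hq Hc HM H.
  assert (Cl : forall j m, Rabs (u m) <= c / (1 - q) + M * q ^ j).
  { induction j; intro m.
    - simpl. pose proof (Rdiv_le_0_compat c (1 - q) Hc ltac:(lra)). specialize (HM m). lra.
    - eapply Rle_trans. apply H.
      specialize (IHj (S m)). apply (Rmult_le_compat_l q) in IHj; [|lra].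
      replace (c / (1 - q) + M * q ^ S j) with (q * (c / (1 - q) + M * q ^ j) + c)
        by (simpl; field; lra). lra. }
  intro m. apply (le_lim _ _ M q Hq). intro j. apply Cl.
Qed.

Lemma tail_bound (u : nat -> R) nu c : 0 <= nu < 1 -> 0 <= c -> ncv u 0 ->
  (forall m, Rabs (u m) <= Rabs (u (S m)) + c * nu ^ m) -> forall m, Rabs (u m) <= c * nu ^ m / (1 - nu).
Proof.
  intros Hnu Hc Hcv H.
  assert (Cl : forall j m, Rabs (u m) <= Rabs (u (j + m)%nat) + c * nu ^ m / (1 - nu)).
  { induction j; intro m.
    - simpl. pose proof (pow_le nu m ltac:(lra)).
      assert (0 <= c * nu ^ m / (1 - nu)) by (apply Rdiv_le_0_compat; nra). lra.
    - eapply Rle_trans. apply H.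
      specialize (IHj (S m)). replace (j + S m)%nat with (S j + m)%nat in IHj by lia.
      replace (c * nu ^ m / (1 - nu)) with (c * nu ^ S m / (1 - nu) + c * nu ^ m)
        by (simpl; field; lra). lra. }
  intro m. apply le_epsilon. intros eps Heps.
  destruct (Hcv eps Heps) as [K HK].
  specialize (Cl K m). specialize (HK (K + m)%nat ltac:(lia)). rewrite Rminus_0_r in HK. lra.
Qed.

Lemma geo_cv (x : nat -> R) A s : 0 <= s < 1 -> (forall m, Rabs (x m) <= A * s ^ m) -> ncv x 0.
Proof.
  intros Hs H eps Heps.
  assert (HA : 0 <= A). { specialize (H 0%nat). simpl in H. pose proof (Rabs_pos (x 0%nat)). lra. }
  destruct (pow_lt_1_zero s ltac:(rewrite Rabs_right; lra) (eps / (A + 1))) as [K HK].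
  { apply Rdiv_lt_0_compat; lra. }
  exists K. intros m Hm. rewrite Rminus_0_r. specialize (HK m Hm). specialize (H m).
  rewrite Rabs_right in HK by (apply Rle_ge, pow_le; lra).
  apply (Rmult_lt_compat_l (A + 1)) in HK; [|lra].
  replace ((A + 1) * (eps / (A + 1))) with eps in HK by (field; lra).
  pose proof (pow_le s m ltac:(lra)). nra.
Qed.

Lemma geo_decay (x : nat -> R) mu nu c : 0 <= mu < 1 -> 0 <= nu < 1 -> 0 <= c ->
  (forall m, Rabs (x (S m)) <= mu * Rabs (x m) + c * nu ^ m) -> ncv x 0.
Proof.
  intros Hmu Hnu Hc H.
  set (s := (1 + Rmax mu nu) / 2).
  assert (Hm1 : mu <= Rmax mu nu) by apply Rmax_l.
  assert (Hm2 : nu <= Rmax mu nu) by apply Rmax_r.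
  assert (Hm3 : Rmax mu nu < 1) by (apply Rmax_lub_lt; lra).
  set (A := Rmax (Rabs (x 0%nat)) (c / (s - mu))).
  apply (geo_cv x A s). unfold s; lra.
  assert (HA1 : Rabs (x 0%nat) <= A) by apply Rmax_l.
  assert (HA2 : c / (s - mu) <= A) by apply Rmax_r.
  assert (HA3 : c <= A * (s - mu)).
  { apply (Rmult_le_compat_r (s - mu)) in HA2; [|unfold s; lra].
    replace (c / (s - mu) * (s - mu)) with c in HA2 by (field; unfold s; lra). lra. }
  induction m.
  - simpl; lra.
  - eapply Rle_trans. apply H.
    assert (nu ^ m <= s ^ m) by (apply pow_incr; unfold s; lra).
    pose proof (pow_le nu m ltac:(lra)).
    assert (0 <= A) by (pose proof (Rabs_pos (x 0%nat)); lra).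
    simpl.
    assert (mu * Rabs (x m) <= mu * (A * s ^ m)) by (apply Rmult_le_compat_l; lra).
    assert (c * nu ^ m <= A * (s - mu) * s ^ m) by (apply Rmult_le_compat; lra).
    nra.
Qed.

Lemma ncv_bounded u l : ncv u l -> exists M, forall m, Rabs (u m) <= M.
Proof.
  intros H. destruct (H 1 ltac:(lra)) as [K HK].
  assert (Fin : forall k, exists B, forall m, (m <= k)%nat -> Rabs (u m) <= B).
  { induction k.
    - exists (Rabs (u 0%nat)). intros m Hm. replace m with 0%nat by lia. lra.
    - destruct IHk as [B HB]. exists (Rmax B (Rabs (u (S k)))). intros m Hm.
      destruct (Nat.eq_dec m (S k)) as [->|]. apply Rmax_r.
      eapply Rle_trans. apply HB; lia. apply Rmax_l. }
  destruct (Fin K) as [B HB]. exists (Rmax B (Rabs l + 1)). intro m.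
  destruct (le_lt_dec m K). eapply Rle_trans. apply HB; lia. apply Rmax_l.
  eapply Rle_trans. 2: apply Rmax_r. specialize (HK m ltac:(lia)).
  pose proof (Rabs_triang_inv (u m) l). lra.
Qed.

Lemma pow_le_one x n : 0 <= x <= 1 -> x ^ n <= 1.
Proof. intros H. induction n; simpl. lra. pose proof (pow_le x n ltac:(lra)). nra. Qed.

Section Core.
Variables (mu nu gam : R) (f g h0 h1 : nat -> vec4).
Hypothesis Hmu : 0 < mu < 1.
Hypothesis Hnu : 0 < nu < 1.
Hypothesis Hgam : 0 <= gam.
Definition qq := gam * (/ (1 - mu) + / (1 - nu)).
Hypothesis Hq : qq < 1.
Definition rowb (a : nat -> vec4) := forall j w W, (forall i, (i < 4)%nat -> Rabs (w i) <= W) ->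
  Rabs (dot4 (a j) w) <= gam * nu ^ j * W.
Hypothesis Hf : rowb f.
Hypothesis Hg : rowb g.
Hypothesis Hh0 : rowb h0.
Hypothesis Hh1 : rowb h1.

Definition bnd (u : nat -> vec4) W := forall m i, (i < 4)%nat -> Rabs (u m i) <= W.

Lemma bnd_nonneg u W : bnd u W -> 0 <= W.
Proof. intro H. specialize (H 0%nat 0%nat ltac:(lia)). pose proof (Rabs_pos (u 0%nat 0%nat)). lra. Qed.

Lemma rowb_weak a u W m : rowb a -> bnd u W -> Rabs (dot4 (a m) (u m)) <= gam * W.
Proof.
  intros Ha Hu. pose proof (bnd_nonneg _ _ Hu).
  eapply Rle_trans. apply Ha. intros i Hi. apply Hu; auto.
  assert (nu ^ m <= 1) by (apply pow_le_one; lra).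
  pose proof (pow_le nu m ltac:(lra)).
  assert (gam * nu ^ m <= gam) by nra. nra.
Qed.

Lemma q_parts W : 0 <= W -> gam * W / (1 - mu) <= qq * W /\ gam * W / (1 - nu) <= qq * W.
Proof.
  intros HW. unfold qq.
  assert (0 <= / (1 - mu)) by (apply Rlt_le, Rinv_0_lt_compat; lra).
  assert (0 <= / (1 - nu)) by (apply Rlt_le, Rinv_0_lt_compat; lra).
  assert (X : 0 <= gam * W) by (apply Rmult_le_pos; lra).
  assert (0 <= gam * W * / (1 - mu)) by (apply Rmult_le_pos; lra).
  assert (0 <= gam * W * / (1 - nu)) by (apply Rmult_le_pos; lra).
  replace (gam * (/ (1 - mu) + / (1 - nu)) * W) with (gam * W * / (1 - mu) + gam * W * / (1 - nu)) by ring.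
  unfold Rdiv. split; lra.
Qed.

Lemma uniq_core (w : nat -> vec4) :
  (forall m, w (S m) 0%nat = mu * w m 0%nat + dot4 (f m) (w m)) ->
  (forall m, w (S m) 1%nat = / mu * w m 1%nat + dot4 (g m) (w m)) ->
  (forall m, w (S m) 2%nat = w m 2%nat + dot4 (h0 m) (w m)) ->
  (forall m, w (S m) 3%nat = w m 3%nat + dot4 (h1 m) (w m)) ->
  w 0%nat 0%nat = 0 ->
  (forall i, (i < 4)%nat -> ncv (fun m => w m i) 0) ->
  forall m i, (i < 4)%nat -> w m i = 0.
Proof.
  intros R0 R1 R2 R3 I0 Cv.
  assert (Step : forall W, bnd w W -> bnd w (qq * W)).
  { intros W HW. pose proof (bnd_nonneg _ _ HW) as W0.
    destruct (q_parts W W0) as [Q1 Q2].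
    intros m i Hi. destruct i as [|[|[|[|i]]]]; [| | | |lia].
    - eapply Rle_trans; [|apply Q1].
      apply (fwd_bound (fun m => w m 0%nat)); try lra; auto.
      apply Rmult_le_pos; lra.
      intro k. rewrite R0. eapply Rle_trans. apply Rabs_triang. rewrite Rabs_mult, (Rabs_right mu) by lra.
      pose proof (rowb_weak f w W k Hf HW). lra.
    - eapply Rle_trans; [|apply Q1].
      apply (back_bound (fun m => w m 1%nat) mu _ W); try lra.
      apply Rmult_le_pos; lra.
      intro k. apply HW; lia.
      intro k. assert (E : w k 1%nat = mu * w (S k) 1%nat - mu * dot4 (g k) (w k)).
      { rewrite R1. field. lra. }
      rewrite E. unfold Rminus. eapply Rle_trans. apply Rabs_triang.
      rewrite Rabs_Ropp, !Rabs_mult, (Rabs_right mu) by lra.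
      pose proof (rowb_weak g w W k Hg HW).
      pose proof (Rabs_pos (dot4 (g k) (w k))).
      assert (mu * Rabs (dot4 (g k) (w k)) <= Rabs (dot4 (g k) (w k))) by nra. simpl. lra.
    - eapply Rle_trans; [|apply Q2].
      eapply Rle_trans. apply (tail_bound (fun m => w m 2%nat) nu (gam * W)); try lra.
      apply Rmult_le_pos; lra. apply Cv; lia.
      intro k. assert (E : w k 2%nat = w (S k) 2%nat - dot4 (h0 k) (w k)) by (rewrite R2; ring).
      rewrite E. unfold Rminus. eapply Rle_trans. apply Rabs_triang. rewrite Rabs_Ropp.
      pose proof (Hh0 k (w k) W ltac:(intros; apply HW; auto)). lra.
      unfold Rdiv. apply Rmult_le_compat_r. apply Rlt_le, Rinv_0_lt_compat; lra.
      assert (nu ^ m <= 1) by (apply pow_le_one; lra). assert (0 <= gam * W) by (apply Rmult_le_pos; lra). pose proof (pow_le nu m ltac:(lra)). nra.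
    - eapply Rle_trans; [|apply Q2].
      eapply Rle_trans. apply (tail_bound (fun m => w m 3%nat) nu (gam * W)); try lra.
      apply Rmult_le_pos; lra. apply Cv; lia.
      intro k. assert (E : w k 3%nat = w (S k) 3%nat - dot4 (h1 k) (w k)) by (rewrite R3; ring).
      rewrite E. unfold Rminus. eapply Rle_trans. apply Rabs_triang. rewrite Rabs_Ropp.
      pose proof (Hh1 k (w k) W ltac:(intros; apply HW; auto)). lra.
      unfold Rdiv. apply Rmult_le_compat_r. apply Rlt_le, Rinv_0_lt_compat; lra.
      assert (nu ^ m <= 1) by (apply pow_le_one; lra). assert (0 <= gam * W) by (apply Rmult_le_pos; lra). pose proof (pow_le nu m ltac:(lra)). nra. }
  destruct (ncv_bounded _ _ (Cv 0%nat ltac:(lia))) as [M0 HM0].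
  destruct (ncv_bounded _ _ (Cv 1%nat ltac:(lia))) as [M1 HM1].
  destruct (ncv_bounded _ _ (Cv 2%nat ltac:(lia))) as [M2 HM2].
  destruct (ncv_bounded _ _ (Cv 3%nat ltac:(lia))) as [M3 HM3].
  set (M := Rmax (Rmax M0 M1) (Rmax M2 M3)).
  assert (B0 : bnd w M).
  { intros m i Hi. unfold M. destruct i as [|[|[|[|i]]]]; [| | | |lia]; simpl in *.
    - eapply Rle_trans. apply HM0. eapply Rle_trans. apply Rmax_l. apply Rmax_l.
    - eapply Rle_trans. apply HM1. eapply Rle_trans. apply Rmax_r. apply Rmax_l.
    - eapply Rle_trans. apply HM2. eapply Rle_trans. apply Rmax_l. apply Rmax_r.
    - eapply Rle_trans. apply HM3. eapply Rle_trans. apply Rmax_r. apply Rmax_r. }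
  assert (Bj : forall j, bnd w (M * qq ^ j)).
  { induction j. simpl. rewrite Rmult_1_r. auto.
    replace (M * qq ^ S j) with (qq * (M * qq ^ j)) by (simpl; ring). auto. }
  intros m i Hi. apply (small_zero _ M qq).
  split; [unfold qq; apply Rmult_le_pos; [lra|]; 
    pose proof (Rinv_0_lt_compat (1 - mu) ltac:(lra)); pose proof (Rinv_0_lt_compat (1 - nu) ltac:(lra)); lra | exact Hq].
  intro j. apply Bj; auto.
Qed.

Fixpoint S0 (u : nat -> vec4) (m : nat) : R :=
  match m with O => 0 | S m' => mu * S0 u m' + dot4 (f m') (u m') end.
Definition t1 (u : nat -> vec4) m k := mu ^ (S k) * dot4 (g (m + k)%nat) (u (m + k)%nat).
Definition t2 (a : nat -> vec4) (u : nat -> vec4) m k := dot4 (a (m + k)%nat) (u (m + k)%nat).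
Definition Kop (u : nat -> vec4) (m : nat) : vec4 := fun i =>
  match i with
  | O => S0 u m
  | 1%nat => - Series (t1 u m)
  | 2%nat => - Series (t2 h0 u m)
  | 3%nat => - Series (t2 h1 u m)
  | _ => 0 end.

Lemma t1_bound u W m : bnd u W -> forall k,
  Rabs (t1 u m k) <= (gam * W) * mu ^ k /\ Rabs (t1 u m k) <= (gam * W * nu ^ m) * nu ^ k.
Proof.
  intros Hu k. pose proof (bnd_nonneg _ _ Hu) as W0. unfold t1.
  rewrite Rabs_mult, (Rabs_right (mu ^ S k)) by (apply Rle_ge, pow_le; lra).
  pose proof (Hg (m + k)%nat (u (m + k)%nat) W ltac:(intros; apply Hu; auto)) as D.
  rewrite pow_add in D.
  pose proof (Rabs_pos (dot4 (g (m + k)%nat) (u (m + k)%nat))).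
  assert (mu ^ S k <= mu ^ k) by (simpl; pose proof (pow_le mu k ltac:(lra)); nra).
  assert (mu ^ S k <= 1) by (apply pow_le_one; lra).
  pose proof (pow_le mu (S k) ltac:(lra)).
  assert (nu ^ m <= 1) by (apply pow_le_one; lra).
  assert (nu ^ k <= 1) by (apply pow_le_one; lra).
  pose proof (pow_le nu m ltac:(lra)). pose proof (pow_le nu k ltac:(lra)).
  assert (G0 : 0 <= gam * W) by (apply Rmult_le_pos; lra).
  set (d := Rabs (dot4 (g (m + k)%nat) (u (m + k)%nat))) in *.
  assert (P1 : nu ^ m * nu ^ k <= 1) by nra.
  assert (gam * W * (nu ^ m * nu ^ k) <= gam * W * 1) by (apply Rmult_le_compat_l; lra).
  assert (d <= gam * W) by nra.
  split.
  - assert (mu ^ S k * d <= mu ^ k * d) by (apply Rmult_le_compat_r; lra).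
    assert (mu ^ k * d <= mu ^ k * (gam * W)) by (apply Rmult_le_compat_l; [apply pow_le; lra| lra]).
    lra.
  - assert (mu ^ S k * d <= d) by nra. nra.
Qed.

Lemma t2_bound a u W m : rowb a -> bnd u W -> forall k,
  Rabs (t2 a u m k) <= (gam * W) * nu ^ k /\ Rabs (t2 a u m k) <= (gam * W * nu ^ m) * nu ^ k.
Proof.
  intros Ha Hu k. pose proof (bnd_nonneg _ _ Hu) as W0. unfold t2.
  pose proof (Ha (m + k)%nat (u (m + k)%nat) W ltac:(intros; apply Hu; auto)) as D.
  rewrite pow_add in D.
  assert (nu ^ m <= 1) by (apply pow_le_one; lra).
  pose proof (pow_le nu m ltac:(lra)). pose proof (pow_le nu k ltac:(lra)).
  assert (G0 : 0 <= gam * W) by (apply Rmult_le_pos; lra).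
  split.
  - assert (gam * W * nu ^ k * nu ^ m <= gam * W * nu ^ k * 1) by (apply Rmult_le_compat_l; [apply Rmult_le_pos|]; lra).
    nra.
  - nra.
Qed.

Lemma ser1 u W m : bnd u W -> ex_series (t1 u m) /\ Rabs (Series (t1 u m)) <= gam * W / (1 - mu)
  /\ Rabs (Series (t1 u m)) <= gam * W * nu ^ m / (1 - nu).
Proof.
  intros Hu. destruct (series_bound (t1 u m) (gam * W) mu ltac:(lra)) as [E1 B1].
  intro k; apply (t1_bound u W m Hu k).
  destruct (series_bound (t1 u m) (gam * W * nu ^ m) nu ltac:(lra)) as [_ B2].
  intro k; apply (t1_bound u W m Hu k). auto.
Qed.

Lemma ser2 a u W m : rowb a -> bnd u W -> ex_series (t2 a u m) /\ Rabs (Series (t2 a u m)) <= gam * W / (1 - nu)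
  /\ Rabs (Series (t2 a u m)) <= gam * W * nu ^ m / (1 - nu).
Proof.
  intros Ha Hu. destruct (series_bound (t2 a u m) (gam * W) nu ltac:(lra)) as [E1 B1].
  intro k; apply (t2_bound a u W m Ha Hu k).
  destruct (series_bound (t2 a u m) (gam * W * nu ^ m) nu ltac:(lra)) as [_ B2].
  intro k; apply (t2_bound a u W m Ha Hu k). auto.
Qed.

Lemma K_bound u W : bnd u W -> bnd (Kop u) (qq * W).
Proof.
  intros Hu. pose proof (bnd_nonneg _ _ Hu) as W0. destruct (q_parts W W0) as [Q1 Q2].
  intros m i Hi. destruct i as [|[|[|[|i]]]]; [| | | |lia]; unfold Kop.
  - eapply Rle_trans; [|apply Q1].
    apply (fwd_bound (fun m => S0 u m)); try lra; auto.
    apply Rmult_le_pos; lra.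
    intro k. simpl. eapply Rle_trans. apply Rabs_triang. rewrite Rabs_mult, (Rabs_right mu) by lra.
    pose proof (rowb_weak f u W k Hf Hu). lra.
  - rewrite Rabs_Ropp. destruct (ser1 u W m Hu) as [_ [B _]]. lra.
  - rewrite Rabs_Ropp. destruct (ser2 h0 u W m Hh0 Hu) as [_ [B _]]. lra.
  - rewrite Rabs_Ropp. destruct (ser2 h1 u W m Hh1 Hu) as [_ [B _]]. lra.
Qed.

Definition dif (u v : nat -> vec4) : nat -> vec4 := fun m i => u m i - v m i.

Lemma dot4_dif a u v m : dot4 a (dif u v m) = dot4 a (u m) - dot4 a (v m).
Proof. unfold dot4, dif. ring. Qed.

Lemma K_lin u v Wu Wv : bnd u Wu -> bnd v Wv -> forall m i, Kop (dif u v) m i = Kop u m i - Kop v m i.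
Proof.
  intros Hu Hv m i. destruct i as [|[|[|[|i]]]]; unfold Kop.
  - induction m. simpl; ring. simpl. rewrite IHm, dot4_dif. ring.
  - rewrite (Series_ext _ (fun k => t1 u m k - t1 v m k)).
    rewrite Series_minus. ring. apply (ser1 u Wu m Hu). apply (ser1 v Wv m Hv).
    intro k. unfold t1. rewrite dot4_dif. ring.
  - rewrite (Series_ext _ (fun k => t2 h0 u m k - t2 h0 v m k)).
    rewrite Series_minus. ring. apply (ser2 h0 u Wu m Hh0 Hu). apply (ser2 h0 v Wv m Hh0 Hv).
    intro k. unfold t2. rewrite dot4_dif. ring.
  - rewrite (Series_ext _ (fun k => t2 h1 u m k - t2 h1 v m k)).
    rewrite Series_minus. ring. apply (ser2 h1 u Wu m Hh1 Hu). apply (ser2 h1 v Wv m Hh1 Hv).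
    intro k. unfold t2. rewrite dot4_dif. ring.
  - ring.
Qed.


Lemma qq_nonneg : 0 <= qq.
Proof. unfold qq. apply Rmult_le_pos; [lra|].
  pose proof (Rinv_0_lt_compat (1 - mu) ltac:(lra)); pose proof (Rinv_0_lt_compat (1 - nu) ltac:(lra)); lra. Qed.

Definition bvec (xi0 c1 c2 : R) (m : nat) : vec4 := fun i =>
  match i with O => xi0 * mu ^ m | 1%nat => 0 | 2%nat => c1 | 3%nat => c2 | _ => 0 end.

Fixpoint Pic xi0 c1 c2 (J : nat) : nat -> vec4 :=
  match J with O => fun _ _ => 0
  | S J' => fun m i => bvec xi0 c1 c2 m i + Kop (Pic xi0 c1 c2 J') m i end.

Definition zfix xi0 c1 c2 : nat -> vec4 := fun m i =>
  Series (fun j => dif (Pic xi0 c1 c2 (S j)) (Pic xi0 c1 c2 j) m i).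

Section Fix.
Variables xi0 c1 c2 : R.
Definition BB := Rmax (Rabs xi0) (Rmax (Rabs c1) (Rabs c2)).

Lemma b_bnd : bnd (bvec xi0 c1 c2) BB.
Proof.
  unfold BB. intros m i Hi. destruct i as [|[|[|[|i]]]]; [| | | |lia]; simpl.
  - rewrite Rabs_mult. rewrite (Rabs_right (mu ^ m)) by (apply Rle_ge, pow_le; lra).
    assert (mu ^ m <= 1) by (apply pow_le_one; lra). pose proof (pow_le mu m ltac:(lra)).
    pose proof (Rabs_pos xi0).
    eapply Rle_trans; [|apply Rmax_l]. nra.
  - rewrite Rabs_R0. eapply Rle_trans; [|apply Rmax_l]. apply Rabs_pos.
  - eapply Rle_trans; [|apply Rmax_r]. apply Rmax_l.
  - eapply Rle_trans; [|apply Rmax_r]. apply Rmax_r.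
Qed.

Lemma BB_nonneg : 0 <= BB.
Proof. apply (bnd_nonneg _ _ b_bnd). Qed.

Lemma Pic_bnd J : bnd (Pic xi0 c1 c2 J) (BB / (1 - qq)).
Proof.
  pose proof BB_nonneg. pose proof qq_nonneg.
  induction J; intros m i Hi; simpl.
  - rewrite Rabs_R0. apply Rdiv_le_0_compat; lra.
  - eapply Rle_trans. apply Rabs_triang.
    pose proof (b_bnd m i Hi). pose proof (K_bound _ _ IHJ m i Hi).
    replace (BB / (1 - qq)) with (BB + qq * (BB / (1 - qq))) by (field; lra). lra.
Qed.

Lemma Pic_dif J : bnd (dif (Pic xi0 c1 c2 (S J)) (Pic xi0 c1 c2 J)) (BB * qq ^ J).
Proof.
  pose proof BB_nonneg. pose proof qq_nonneg.
  induction J; intros m i Hi.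
  - unfold dif; simpl. rewrite Rminus_0_r, Rmult_1_r.
    assert (HP0 : bnd (Pic xi0 c1 c2 0) 0) by (intros ? ? ?; simpl; rewrite Rabs_R0; lra).
    pose proof (K_bound _ _ HP0 m i Hi). pose proof (b_bnd m i Hi).
    eapply Rle_trans. apply Rabs_triang. simpl in *. lra.
  - unfold dif. change (Pic xi0 c1 c2 (S (S J)) m i) with (bvec xi0 c1 c2 m i + Kop (Pic xi0 c1 c2 (S J)) m i).
    change (Pic xi0 c1 c2 (S J) m i) with (bvec xi0 c1 c2 m i + Kop (Pic xi0 c1 c2 J) m i).
    replace (bvec xi0 c1 c2 m i + Kop (Pic xi0 c1 c2 (S J)) m i - (bvec xi0 c1 c2 m i + Kop (Pic xi0 c1 c2 J) m i))
      with (Kop (Pic xi0 c1 c2 (S J)) m i - Kop (Pic xi0 c1 c2 J) m i) by ring.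
    rewrite <- (K_lin _ _ _ _ (Pic_bnd (S J)) (Pic_bnd J)).
    replace (BB * qq ^ S J) with (qq * (BB * qq ^ J)) by (change (qq ^ S J) with (qq * qq ^ J); ring).
    apply K_bound; auto.
Qed.

Lemma sum_tel m i J : sum_f_R0 (fun j => dif (Pic xi0 c1 c2 (S j)) (Pic xi0 c1 c2 j) m i) J
  = Pic xi0 c1 c2 (S J) m i.
Proof.
  induction J. simpl. unfold dif. simpl. ring.
  rewrite tech5, IHJ. unfold dif. ring.
Qed.

Lemma z_close J : bnd (dif (zfix xi0 c1 c2) (Pic xi0 c1 c2 J)) (BB * qq ^ J / (1 - qq)).
Proof.
  pose proof BB_nonneg. pose proof qq_nonneg.
  intros m i Hi. unfold dif at 1, zfix. cbv beta.
  set (D := fun j => dif (Pic xi0 c1 c2 (S j)) (Pic xi0 c1 c2 j) m i).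
  assert (HD : forall j, Rabs (D j) <= BB * qq ^ j) by (intro j; apply Pic_dif; auto).
  destruct (series_bound D BB qq ltac:(lra) HD) as [Ex _].
  destruct J.
  - change (Pic xi0 c1 c2 0 m i) with 0. rewrite Rminus_0_r.
    destruct (series_bound D BB qq ltac:(lra) HD) as [_ B0]. simpl. rewrite Rmult_1_r. exact B0.
  - rewrite (Series_incr_n D (S J)) by (auto; lia).
    simpl Init.Nat.pred. unfold D at 1. rewrite sum_tel.
    replace (Pic xi0 c1 c2 (S J) m i + Series (fun k => D (S J + k)%nat) - Pic xi0 c1 c2 (S J) m i)
      with (Series (fun k => D (S J + k)%nat)) by ring.
    apply (series_bound (fun k => D (S J + k)%nat) (BB * qq ^ S J) qq ltac:(lra)).
    intro k. rewrite Rmult_assoc, <- pow_add. apply HD.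
Qed.

Lemma z_bnd : bnd (zfix xi0 c1 c2) (BB / (1 - qq)).
Proof.
  intros m i Hi. pose proof (z_close 0 m i Hi). unfold dif in H. simpl in H.
  rewrite Rminus_0_r, Rmult_1_r in H. exact H.
Qed.

Lemma z_fix m i : (i < 4)%nat -> zfix xi0 c1 c2 m i = bvec xi0 c1 c2 m i + Kop (zfix xi0 c1 c2) m i.
Proof.
  intros Hi. pose proof BB_nonneg. pose proof qq_nonneg.
  apply Rminus_diag_uniq.
  apply (small_zero _ (2 * BB / (1 - qq)) qq). split; [lra|exact Hq].
  intro J.
  set (z := zfix xi0 c1 c2).
  assert (E : z m i - (bvec xi0 c1 c2 m i + Kop z m i)
     = (z m i - Pic xi0 c1 c2 (S J) m i) + Kop (dif (Pic xi0 c1 c2 J) z) m i).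
  { rewrite (K_lin _ _ _ _ (Pic_bnd J) z_bnd). change (Pic xi0 c1 c2 (S J) m i) with (bvec xi0 c1 c2 m i + Kop (Pic xi0 c1 c2 J) m i). unfold z. ring. }
  rewrite E. eapply Rle_trans. apply Rabs_triang.
  pose proof (z_close (S J) m i Hi) as C1. unfold dif in C1.
  assert (C2 : bnd (dif (Pic xi0 c1 c2 J) z) (BB * qq ^ J / (1 - qq))).
  { intros m' i' Hi'. unfold dif. rewrite Rabs_minus_sym. apply z_close; auto. }
  pose proof (K_bound _ _ C2 m i Hi) as C3.
  replace (BB * qq ^ S J / (1 - qq)) with (qq * (BB * qq ^ J / (1 - qq))) in C1 by (simpl; field; lra).
  assert (qq * (BB * qq ^ J / (1 - qq)) <= BB * qq ^ J / (1 - qq)).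
  { assert (0 <= BB * qq ^ J / (1 - qq)) by (apply Rdiv_le_0_compat; [apply Rmult_le_pos; [lra|apply pow_le; lra]|lra]).
    nra. }
  replace (2 * BB / (1 - qq) * qq ^ J) with (2 * (BB * qq ^ J / (1 - qq))) by (field; lra).
  unfold z in *. lra.
Qed.

Lemma z_rec0 m : zfix xi0 c1 c2 (S m) 0%nat = mu * zfix xi0 c1 c2 m 0%nat + dot4 (f m) (zfix xi0 c1 c2 m).
Proof.
  rewrite (z_fix (S m) 0%nat) by lia. rewrite (z_fix m 0%nat) by lia.
  change (Kop (zfix xi0 c1 c2) (S m) 0%nat) with (mu * S0 (zfix xi0 c1 c2) m + dot4 (f m) (zfix xi0 c1 c2 m)).
  unfold bvec. change (mu ^ S m) with (mu * mu ^ m). unfold Kop. ring.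
Qed.

Lemma t1_shift m : Series (t1 (zfix xi0 c1 c2) m)
  = mu * dot4 (g m) (zfix xi0 c1 c2 m) + mu * Series (t1 (zfix xi0 c1 c2) (S m)).
Proof.
  destruct (ser1 _ _ m z_bnd) as [Ex _].
  rewrite Series_incr_1 by exact Ex.
  rewrite <- Series_scal_l.
  rewrite (Series_ext (fun k => t1 (zfix xi0 c1 c2) m (S k)) (fun k => mu * t1 (zfix xi0 c1 c2) (S m) k)).
  unfold t1 at 1. rewrite Nat.add_0_r. simpl pow. ring.
  intro k. unfold t1. replace (m + S k)%nat with (S m + k)%nat by lia.
  change (mu ^ S (S k)) with (mu * mu ^ S k). ring.
Qed.

Lemma t2_shift a m : rowb a -> Series (t2 a (zfix xi0 c1 c2) m)
  = dot4 (a m) (zfix xi0 c1 c2 m) + Series (t2 a (zfix xi0 c1 c2) (S m)).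
Proof.
  intro Ha. destruct (ser2 a _ _ m Ha z_bnd) as [Ex _].
  rewrite Series_incr_1 by exact Ex.
  rewrite (Series_ext (fun k => t2 a (zfix xi0 c1 c2) m (S k)) (fun k => t2 a (zfix xi0 c1 c2) (S m) k)).
  replace (t2 a (zfix xi0 c1 c2) m 0%nat) with (dot4 (a m) (zfix xi0 c1 c2 m))
    by (unfold t2; rewrite Nat.add_0_r; reflexivity). reflexivity.
  intro k. unfold t2. replace (m + S k)%nat with (S m + k)%nat by lia. reflexivity.
Qed.

Lemma z_rec1 m : zfix xi0 c1 c2 (S m) 1%nat = / mu * zfix xi0 c1 c2 m 1%nat + dot4 (g m) (zfix xi0 c1 c2 m).
Proof.
  rewrite (z_fix (S m) 1%nat) by lia. rewrite (z_fix m 1%nat) by lia.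
  unfold bvec, Kop. rewrite (t1_shift m). field. lra.
Qed.

Lemma z_rec2 m : zfix xi0 c1 c2 (S m) 2%nat = zfix xi0 c1 c2 m 2%nat + dot4 (h0 m) (zfix xi0 c1 c2 m).
Proof.
  rewrite (z_fix (S m) 2%nat) by lia. rewrite (z_fix m 2%nat) by lia.
  unfold bvec, Kop. rewrite (t2_shift h0 m Hh0). ring.
Qed.

Lemma z_rec3 m : zfix xi0 c1 c2 (S m) 3%nat = zfix xi0 c1 c2 m 3%nat + dot4 (h1 m) (zfix xi0 c1 c2 m).
Proof.
  rewrite (z_fix (S m) 3%nat) by lia. rewrite (z_fix m 3%nat) by lia.
  unfold bvec, Kop. rewrite (t2_shift h1 m Hh1). ring.
Qed.

Lemma z_init : zfix xi0 c1 c2 0%nat 0%nat = xi0.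
Proof.
  rewrite (z_fix 0%nat 0%nat) by lia. unfold bvec, Kop. simpl. ring.
Qed.

Lemma z_cv0 : ncv (fun m => zfix xi0 c1 c2 m 0%nat) 0.
Proof.
  pose proof z_bnd as Hz. pose proof (bnd_nonneg _ _ Hz).
  apply (geo_decay _ mu nu (gam * (BB / (1 - qq)))); try lra.
  apply Rmult_le_pos; lra.
  intro m. rewrite z_rec0. eapply Rle_trans. apply Rabs_triang.
  rewrite Rabs_mult, (Rabs_right mu) by lra.
  pose proof (Hf m (zfix xi0 c1 c2 m) (BB / (1 - qq)) ltac:(intros; apply Hz; auto)). lra.
Qed.

Lemma z_cv1 : ncv (fun m => zfix xi0 c1 c2 m 1%nat) 0.
Proof.
  apply (geo_cv _ (gam * (BB / (1 - qq)) / (1 - nu)) nu). lra.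
  intro m. rewrite (z_fix m 1%nat) by lia. unfold bvec, Kop.
  rewrite Rplus_0_l, Rabs_Ropp.
  destruct (ser1 _ _ m z_bnd) as [_ [_ B]]. eapply Rle_trans. exact B.
  right. field. lra.
Qed.

Lemma z_cv2 : ncv (fun m => zfix xi0 c1 c2 m 2%nat) c1.
Proof.
  intros eps Heps.
  assert (G : ncv (fun m => - Series (t2 h0 (zfix xi0 c1 c2) m)) 0).
  { apply (geo_cv _ (gam * (BB / (1 - qq)) / (1 - nu)) nu). lra.
  intro m. rewrite Rabs_Ropp. destruct (ser2 h0 _ _ m Hh0 z_bnd) as [_ [_ B]]. eapply Rle_trans. exact B.
  right. field. lra. }
  destruct (G eps Heps) as [K HK].
  exists K. intros m Hm. specialize (HK m Hm). simpl in HK.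
  rewrite (z_fix m 2%nat) by lia. unfold bvec, Kop.
  replace (c1 + - Series (t2 h0 (zfix xi0 c1 c2) m) - c1) with (- Series (t2 h0 (zfix xi0 c1 c2) m) - 0) by ring.
  exact HK.
Qed.

Lemma z_cv3 : ncv (fun m => zfix xi0 c1 c2 m 3%nat) c2.
Proof.
  intros eps Heps.
  assert (G : ncv (fun m => - Series (t2 h1 (zfix xi0 c1 c2) m)) 0).
  { apply (geo_cv _ (gam * (BB / (1 - qq)) / (1 - nu)) nu). lra.
  intro m. rewrite Rabs_Ropp. destruct (ser2 h1 _ _ m Hh1 z_bnd) as [_ [_ B]]. eapply Rle_trans. exact B.
  right. field. lra. }
  destruct (G eps Heps) as [K HK].
  exists K. intros m Hm. specialize (HK m Hm). simpl in HK.
  rewrite (z_fix m 3%nat) by lia. unfold bvec, Kop.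
  replace (c2 + - Series (t2 h1 (zfix xi0 c1 c2) m) - c2) with (- Series (t2 h1 (zfix xi0 c1 c2) m) - 0) by ring.
  exact HK.
Qed.
End Fix.


End Core.
Theorem lemma3 (mu nu C : R) (N0 : Z) (F G : Z -> vec4) (H : Z -> nat -> vec4) :
  0 < mu < 1 -> 0 < nu < 1 -> C > 0 ->
  (forall n : Z, (N0 <= n)%Z ->
     norm14 (F n) <= C * powerRZ nu n /\
     norm14 (G n) <= C * powerRZ nu n /\
     norm24 (H n) <= C * powerRZ nu n) ->
  exists N : Z, (N0 <= N)%Z /\
    forall (xi0 chip1 chip2 : R),
      (exists zeta : Z -> vec4,
         is_solution mu F G H N zeta /\ zeta N 0%nat = xi0 /\
         Zcv (fun n => zeta n 2%nat) chip1 /\ Zcv (fun n => zeta n 3%nat) chip2 /\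
         Zcv (fun n => zeta n 0%nat) 0 /\ Zcv (fun n => zeta n 1%nat) 0) /\
      (forall zeta zeta' : Z -> vec4,
         is_solution mu F G H N zeta /\ zeta N 0%nat = xi0 /\
         Zcv (fun n => zeta n 2%nat) chip1 /\ Zcv (fun n => zeta n 3%nat) chip2 /\
         Zcv (fun n => zeta n 0%nat) 0 /\ Zcv (fun n => zeta n 1%nat) 0 ->
         is_solution mu F G H N zeta' /\ zeta' N 0%nat = xi0 /\
         Zcv (fun n => zeta' n 2%nat) chip1 /\ Zcv (fun n => zeta' n 3%nat) chip2 /\
         Zcv (fun n => zeta' n 0%nat) 0 /\ Zcv (fun n => zeta' n 1%nat) 0 ->
         forall n : Z, (N <= n)%Z -> forall i : nat, (i < 4)%nat ->
           zeta n i = zeta' n i).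
Proof.
  intros Hmu Hnu HC HB.
  set (D := / (1 - mu) + / (1 - nu)).
  assert (HD : 0 < D) by (unfold D; pose proof (Rinv_0_lt_compat (1 - mu) ltac:(lra));
    pose proof (Rinv_0_lt_compat (1 - nu) ltac:(lra)); lra).
  destruct (pow_lt_1_zero nu ltac:(rewrite Rabs_right; lra) (/ (2 * C * D))) as [K HK].
  { apply Rinv_0_lt_compat. nra. }
  set (n0 := Nat.max K (Z.to_nat N0)).
  set (N := Z.of_nat n0).
  assert (HN : (N0 <= N)%Z) by (unfold N, n0; lia).
  exists N. split; [exact HN|].
  set (gam := 2 * C * nu ^ n0).
  assert (Hgam : 0 <= gam) by (unfold gam; pose proof (pow_le nu n0 ltac:(lra)); nra).
  assert (Hq : qq mu nu gam < 1).
  { unfold qq, gam. fold D. specialize (HK n0 ltac:(unfold n0; lia)).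
    rewrite Rabs_right in HK by (apply Rle_ge, pow_le; lra).
    apply (Rmult_lt_compat_l (2 * C * D)) in HK; [|nra].
    rewrite Rinv_r in HK by nra. nra. }
  set (f := fun j : nat => F (N + Z.of_nat j)%Z).
  set (g := fun j : nat => G (N + Z.of_nat j)%Z).
  set (h0 := fun j : nat => H (N + Z.of_nat j)%Z 0%nat).
  set (h1 := fun j : nat => H (N + Z.of_nat j)%Z 1%nat).
  assert (Hpow : forall j, powerRZ nu (N + Z.of_nat j) = nu ^ n0 * nu ^ j).
  { intro j. unfold N. rewrite <- Nat2Z.inj_add, <- pow_powerRZ, pow_add. reflexivity. }
  assert (RB : forall (a : nat -> vec4), (forall j, norm14 (a j) <= C * powerRZ nu (N + Z.of_nat j)) -> rowb nu gam a).
  { intros a Ha j w W Hw. eapply Rle_trans. apply dot4_bound; eauto.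
    assert (W0 : 0 <= W) by (specialize (Hw 0%nat ltac:(lia)); pose proof (Rabs_pos (w 0%nat)); lra).
    specialize (Ha j). rewrite Hpow in Ha. unfold gam.
    replace (2 * C * nu ^ n0 * nu ^ j * W) with (2 * (C * (nu ^ n0 * nu ^ j)) * W) by ring.
    apply Rmult_le_compat_r; [exact W0|]. lra. }
  assert (Hf : rowb nu gam f).
  { apply RB. intro j. apply (HB (N + Z.of_nat j)%Z). lia. }
  assert (Hg : rowb nu gam g).
  { apply RB. intro j. apply (HB (N + Z.of_nat j)%Z). lia. }
  assert (Hh0 : rowb nu gam h0).
  { apply RB. intro j. eapply Rle_trans. apply norm24_row0. apply (HB (N + Z.of_nat j)%Z). lia. }
  assert (Hh1 : rowb nu gam h1).
  { apply RB. intro j. eapply Rle_trans. apply norm24_row1. apply (HB (N + Z.of_nat j)%Z). lia. }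
  clear RB.
  intros xi0 chip1 chip2. split.
  - set (z := zfix mu f g h0 h1 xi0 chip1 chip2).
    exists (fun n => z (Z.to_nat (n - N))).
    assert (ZC : forall i l, ncv (fun m => z m i) l -> Zcv (fun n => z (Z.to_nat (n - N)) i) l).
    { intros i l Hc eps Heps. destruct (Hc eps Heps) as [Km HKm].
      exists (N + Z.of_nat Km)%Z. intros n Hn. apply HKm. lia. }
    split; [|split; [|split; [|split; [|split]]]].
    + intros n Hn. set (m := Z.to_nat (n - N)).
      assert (E1 : Z.to_nat (n + 1 - N) = S m) by (unfold m; lia).
      assert (E2 : n = (N + Z.of_nat m)%Z) by (unfold m; lia).
      rewrite E1. fold m.
      pose proof (z_rec0 mu nu gam f g h0 h1 Hmu Hnu Hgam Hq Hf Hg Hh0 Hh1 xi0 chip1 chip2 m) as R0.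
      pose proof (z_rec1 mu nu gam f g h0 h1 Hmu Hnu Hgam Hq Hf Hg Hh0 Hh1 xi0 chip1 chip2 m) as R1.
      pose proof (z_rec2 mu nu gam f g h0 h1 Hmu Hnu Hgam Hq Hf Hg Hh0 Hh1 xi0 chip1 chip2 m) as R2.
      pose proof (z_rec3 mu nu gam f g h0 h1 Hmu Hnu Hgam Hq Hf Hg Hh0 Hh1 xi0 chip1 chip2 m) as R3.
      fold z in R0, R1, R2, R3. unfold f, g, h0, h1 in R0, R1, R2, R3. rewrite <- E2 in R0, R1, R2, R3.
      auto.
    + replace (Z.to_nat (N - N)) with 0%nat by lia.
      apply (z_init mu nu gam f g h0 h1 Hmu Hnu Hgam Hq Hf Hg Hh0 Hh1).
    + apply ZC. apply (z_cv2 mu nu gam f g h0 h1 Hmu Hnu Hgam Hq Hf Hg Hh0 Hh1).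
    + apply ZC. apply (z_cv3 mu nu gam f g h0 h1 Hmu Hnu Hgam Hq Hf Hg Hh0 Hh1).
    + apply ZC. apply (z_cv0 mu nu gam f g h0 h1 Hmu Hnu Hgam Hq Hf Hg Hh0 Hh1).
    + apply ZC. apply (z_cv1 mu nu gam f g h0 h1 Hmu Hnu Hgam Hq Hf Hg Hh0 Hh1).
  - intros zeta zeta' [S1 [I1 [A2 [A3 [A0 A1]]]]] [S1' [I1' [A2' [A3' [A0' A1']]]]] n Hn i Hi.
    set (w := fun (m : nat) (i : nat) => zeta (N + Z.of_nat m)%Z i - zeta' (N + Z.of_nat m)%Z i).
    assert (RS : forall m, (N + Z.of_nat (S m) = N + Z.of_nat m + 1)%Z) by (intro; lia).
    assert (Wz := uniq_core mu nu gam f g h0 h1 Hmu Hnu Hgam Hq Hf Hg Hh0 Hh1 w).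
    assert (CV : forall (u v : Z -> R) l, Zcv u l -> Zcv v l -> ncv (fun m => u (N + Z.of_nat m)%Z - v (N + Z.of_nat m)%Z) 0).
    { intros u v l Hu Hv eps Heps.
      destruct (Hu (eps / 2) ltac:(lra)) as [M1 HM1]. destruct (Hv (eps / 2) ltac:(lra)) as [M2 HM2].
      exists (Z.to_nat (Z.max M1 M2 - N)). intros m Hm.
      specialize (HM1 (N + Z.of_nat m)%Z ltac:(lia)). specialize (HM2 (N + Z.of_nat m)%Z ltac:(lia)).
      rewrite Rminus_0_r.
      replace (u (N + Z.of_nat m)%Z - v (N + Z.of_nat m)%Z) with ((u (N + Z.of_nat m)%Z - l) - (v (N + Z.of_nat m)%Z - l)) by ring.
      eapply Rle_lt_trans. apply Rabs_triang. rewrite Rabs_Ropp. lra. }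
    assert (W0 : w (Z.to_nat (n - N)) i = 0).
    { apply Wz; auto.
      - intro m. unfold w. rewrite RS.
        destruct (S1 (N + Z.of_nat m)%Z ltac:(lia)) as [E _]. destruct (S1' (N + Z.of_nat m)%Z ltac:(lia)) as [E' _].
        rewrite E, E'. unfold f, dot4. ring.
      - intro m. unfold w. rewrite RS.
        destruct (S1 (N + Z.of_nat m)%Z ltac:(lia)) as [_ [E _]]. destruct (S1' (N + Z.of_nat m)%Z ltac:(lia)) as [_ [E' _]].
        rewrite E, E'. unfold g, dot4. ring.
      - intro m. unfold w. rewrite RS.
        destruct (S1 (N + Z.of_nat m)%Z ltac:(lia)) as [_ [_ [E _]]]. destruct (S1' (N + Z.of_nat m)%Z ltac:(lia)) as [_ [_ [E' _]]].
        rewrite E, E'. unfold h0, dot4. ring.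
      - intro m. unfold w. rewrite RS.
        destruct (S1 (N + Z.of_nat m)%Z ltac:(lia)) as [_ [_ [_ E]]]. destruct (S1' (N + Z.of_nat m)%Z ltac:(lia)) as [_ [_ [_ E']]].
        rewrite E, E'. unfold h1, dot4. ring.
      - unfold w. replace (N + Z.of_nat 0)%Z with N by lia. rewrite I1, I1'. ring.
      - intros j Hj. unfold w. destruct j as [|[|[|[|j]]]]; [| | | |lia].
        + exact (CV _ _ 0 A0 A0').
        + exact (CV _ _ 0 A1 A1').
        + exact (CV _ _ chip1 A2 A2').
        + exact (CV _ _ chip2 A3 A3'). }
    unfold w in W0. replace (N + Z.of_nat (Z.to_nat (n - N)))%Z with n in W0 by lia. lra.
Qed.
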